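(* Let $n\ge 3$, $k\ge 2$, and let $a,b\ge 2$ be integers with $a+b=k+1$. Let $G$ be a spanning subgraph of $CT_n$ containing no cycle of length $4k+2$. If $C$ is a cycle of length $4a$ in $G$ and $C'$ is a cycle of length $4b$ in $G$, and $C$ and $C'$ have at least one common edge, then $|\mathrm{supp}(C)\cap\mathrm{supp}(C')|\ge 3$.
   Context: $\mathrm{S}_n$ is the symmetric group on $\{1,\dots,n\}$; $\mathrm{supp}(x)=\{i:i^x\ne i\}$. $CT_n$ has vertex set $\mathrm{S}_n$, with $\{x,y\}$ an edge iff $yx^{-1}$ is a transposition. The support of an edge $\{u,z\}$ is $\mathrm{supp}(\{u,z\})=\mathrm{supp}(zu^{-1})$, and for a subgraph $H$ of $CT_n$, $\mathrm{supp}(H)=\bigcup_{\{u,z\}\in E(H)}\mathrm{supp}(\{u,z\})$. *)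

(* Defs.v *)
From mathcomp Require Import all_boot all_order all_fingroup.
Set Implicit Arguments. Unset Strict Implicit. Unset Printing Implicit Defensive.
Local Open Scope group_scope.

Section CT.
Variable n : nat.

Definition psupp (x : 'S_n) : {set 'I_n} := [set i | x i != i].

Definition is_transp (x : 'S_n) : bool :=
  [exists i : 'I_n, exists j : 'I_n, (i != j) && (x == tperm i j)].

(* MathComp composes permutations left-to-right ((s * t) i = t (s i)),
   matching the paper's right action i^x, so y x^{-1} is [y * x^-1]. *)
Definition CT_adj (x y : 'S_n) : bool := is_transp (y * x^-1).

Definition edge_supp (u z : 'S_n) : {set 'I_n} := psupp (z * u^-1).

Definition spanning_subgraph_CT (G : rel 'S_n) : Prop :=
  symmetric G /\ (forall x y, G x y -> CT_adj x y).

Definition is_cycle_of_length (G : rel 'S_n) (m : nat) (c : seq 'S_n) : bool :=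
  [&& 3 <= m, size c == m, uniq c & path.cycle G c].

Definition cycle_edges (c : seq 'S_n) : seq ('S_n * 'S_n) := zip c (rot 1 c).

Definition cycle_supp (c : seq 'S_n) : {set 'I_n} :=
  \bigcup_(e <- cycle_edges c) edge_supp e.1 e.2.

Definition common_edge (c c' : seq 'S_n) : bool :=
  has (fun e => ((e \in cycle_edges c') || ((e.2, e.1) \in cycle_edges c')))
      (cycle_edges c).

End CT.

(* Main.v *)
Require Import Defs.
From mathcomp Require Import all_boot all_order all_fingroup zify.
Set Implicit Arguments. Unset Strict Implicit. Unset Printing Implicit Defensive.

Lemma arith1 k a b sp sq : 2 <= k -> a + b = k + 1 -> sp.+2 = 4*a -> sq + 2 = 4*b ->
  (2 < 4*k+2) && ((sp.+1 + sq.+1) == 4*k+2).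
Proof. move=> *; apply/andP; split; [lia| apply/eqP; lia]. Qed.
Lemma arith2 a : 2 <= a -> 2 <= 4 * a. Proof. lia. Qed.
Lemma arith3 s b : (s.+2 = 4 * b) -> s + 2 = 4*b. Proof. lia. Qed.

Section ZipRot.
Variables (S T : Type).
Lemma take_zip' (s : seq S) (t : seq T) r : take r (zip s t) = zip (take r s) (take r t).
Proof. by elim: s t r => [|x s IH] [|y t] [|r] //=; rewrite IH. Qed.
Lemma drop_zip' (s : seq S) (t : seq T) r : drop r (zip s t) = zip (drop r s) (drop r t).
Proof. by elim: s t r => [|x s IH] [|y t] [|r] //=; case: (drop _ _). Qed.
Lemma rot_zip' (s : seq S) (t : seq T) r : size s = size t ->
  rot r (zip s t) = zip (rot r s) (rot r t).
Proof.
move=> Hs; rewrite /rot drop_zip' take_zip' zip_cat //.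
by rewrite !size_drop Hs.
Qed.
End ZipRot.

Section H.
Variable n : nat.
Local Open Scope group_scope.
Implicit Types (x y z w : 'S_n).

Lemma psuppM x y : psupp (x * y) \subset psupp x :|: psupp y.
Proof.
apply/subsetP => i; rewrite !inE permM => H.
case: (eqVneq (x i) i) => [E|] //; by rewrite E in H *; rewrite H orbT.
Qed.

Lemma psuppV x : psupp x^-1 = psupp x.
Proof.
apply/setP=> i; rewrite !inE.
by rewrite -(inj_eq (@perm_inj _ x)) permKV eq_sym.
Qed.

Lemma psupp1 : psupp (1 : 'S_n) = set0.
Proof. by apply/setP => i; rewrite !inE perm1 eqxx. Qed.

Lemma psupp_tperm (i j : 'I_n) : i != j -> psupp (tperm i j) = [set i; j].
Proof.
move=> ij; apply/setP => k; rewrite !inE.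
case: tpermP => [->|->|/eqP ki /eqP kj].
- by rewrite eqxx eq_sym ij.
- by rewrite eqxx orbT ij.
- by rewrite eqxx; apply/esym/norP.
Qed.

Lemma supp_two g (i j : 'I_n) : i != j -> psupp g \subset [set i; j] ->
  g = 1 \/ g = tperm i j.
Proof.
move=> ij /subsetP sub.
have out k : k != i -> k != j -> g k = k.
  move=> ki kj; apply/eqP; apply/negPn/negP => H.
  by have := sub k; rewrite !inE H (negbTE ki) (negbTE kj) => /(_ isT).
have inij k : g k != k -> (g k == i) || (g k == j).
  move=> H; have := sub (g k); rewrite !inE; apply.
  by rewrite (inj_eq (@perm_inj _ g)).
case: (eqVneq (g i) i) => [gi|gi].
  left; apply/permP => k; rewrite perm1.
  case: (eqVneq k i) => [->//|ki].
  case: (eqVneq k j) => [->|kj]; last exact: out.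
  case: (eqVneq (g j) j) => [//|gj].
  case/orP: (inij _ gj) => /eqP E.
    by move: ij; rewrite -gi in E; rewrite (perm_inj E) eqxx.
  by rewrite E eqxx in gj.
right; apply/permP => k.
have gij : g i = j.
  by case/orP: (inij _ gi) => /eqP E //; rewrite E eqxx in gi.
have gji : g j = i.
  case: (eqVneq (g j) j) => [gj|gj].
    by move: ij; rewrite -gj in gij; rewrite (perm_inj gij) eqxx.
  by case/orP: (inij _ gj) => /eqP E //; rewrite E eqxx in gj.
case: tpermP => [->|->|/eqP ki /eqP kj] //; exact: out.
Qed.

Lemma vsupp x s t w : w \in x :: s ->
  psupp (w * x^-1) \subset \bigcup_(e <- zip (x :: s) (s ++ t)) edge_supp e.1 e.2.
Proof.
elim: s x => [|z s IH] x /=.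
  by rewrite inE => /eqP ->; rewrite mulgV psupp1 sub0set.
rewrite inE big_cons => /predU1P [->|Hw]; first by rewrite mulgV psupp1 sub0set.
have -> : w * x^-1 = (w * z^-1) * (z * x^-1) by rewrite mulgA mulgKV.
apply: subset_trans (psuppM _ _) _.
rewrite setUC; apply: setUSS; first exact: subxx.
exact: IH.
Qed.

Lemma vsupp_cycle x s w : w \in x :: s -> psupp (w * x^-1) \subset cycle_supp (x :: s).
Proof. by rewrite /cycle_supp /cycle_edges rot1_cons -cats1; exact: vsupp. Qed.

Lemma cycle_edges_rot r (c : seq 'S_n) : cycle_edges (rot r c) = rot r (cycle_edges c).
Proof. by rewrite /cycle_edges rot_rot rot_zip' // size_rot. Qed.

Lemma cycle_supp_rot r (c : seq 'S_n) : cycle_supp (rot r c) = cycle_supp c.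
Proof. by rewrite /cycle_supp cycle_edges_rot; apply: perm_big; rewrite perm_rot. Qed.

Lemma rot_to_edge (c : seq 'S_n) e : 2 <= size c -> e \in cycle_edges c ->
  exists r p, rot r c = e.1 :: e.2 :: p.
Proof.
move=> sc He; exists (index e (cycle_edges c)).
have := rot_index He; rewrite -cycle_edges_rot.
case Hc: (rot _ c) => [|u [|v p]].
- by move: sc; rewrite -(size_rot (index e (cycle_edges c))) Hc.
- by move: sc; rewrite -(size_rot (index e (cycle_edges c))) Hc.
rewrite /cycle_edges rot1_cons /= => [[<-]] _; by exists p.
Qed.

Lemma build (G : rel 'S_n) x y p q : uniq (x :: y :: p) -> uniq (y :: x :: q) ->
  path G y (rcons p x) -> path G x (rcons q y) ->
  (forall w, w \in p -> w \in q -> False) ->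
  uniq ((y :: p) ++ (x :: q)) && path.cycle G ((y :: p) ++ (x :: q)).
Proof.
move=> u1 u2 p1 p2 D; apply/andP; split.
  move: u1 u2 => /= /andP [xyp /andP [yp up]] /andP [yxq /andP [xq uq]].
  rewrite cat_uniq /= up xq uq andbT mem_cat negb_or yp yxq /=.
  rewrite andbT; apply/negP => /orP [xin | /hasP [w wq wp]].
    by move: xyp; rewrite inE xin orbT.
  exact: (D w wp wq).
rewrite /= rcons_cat cat_path.
move: p1; rewrite rcons_path => /andP [-> H]; by rewrite /= H p2.
Qed.

Lemma rev_form (G : rel 'S_n) x y q : symmetric G -> path G y (rcons q x) ->
  path G x (rcons (rev q) y).
Proof.
move=> Gs H.
have := rev_path G y (rcons q x); rewrite last_rcons belast_rcons rev_cons => ->.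
by rewrite (eq_path (e' := G)) // => u v; rewrite Gs.
Qed.


Lemma core (S S' : {set 'I_n}) x y w : #|S :&: S'| <= 2 -> is_transp (y * x^-1) ->
  psupp (y * x^-1) \subset S -> psupp (y * x^-1) \subset S' ->
  psupp (w * x^-1) \subset S -> psupp (w * x^-1) \subset S' -> w = x \/ w = y.
Proof.
move=> Hle /existsP [i /existsP [j /andP [ij /eqP E]]] h1 h2 h3 h4.
have sub : [set i; j] \subset S :&: S' by rewrite -psupp_tperm // -E subsetI h1 h2.
have /eqP eq : [set i; j] == S :&: S'.
  by rewrite eqEcard sub cards2 ij.
have : psupp (w * x^-1) \subset [set i; j] by rewrite eq subsetI h3 h4.
case/(supp_two ij) => E2.
  by left; rewrite -(mulgKV x w) E2 mul1g.
by right; rewrite -(mulgKV x w) E2 -E mulgKV.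
Qed.

End H.

Theorem lemma3p2 (n k a b : nat) (G : rel 'S_n) (C C' : seq 'S_n) :
  3 <= n -> 2 <= k -> 2 <= a -> 2 <= b -> a + b = k + 1 ->
  spanning_subgraph_CT G ->
  (forall c : seq 'S_n, ~~ is_cycle_of_length G (4 * k + 2) c) ->
  is_cycle_of_length G (4 * a) C ->
  is_cycle_of_length G (4 * b) C' ->
  common_edge C C' ->
  3 <= #|cycle_supp C :&: cycle_supp C'|.
Proof.
move=> _ Hk Ha Hb Hab [Gs Gsub] noC /and4P [_ /eqP sC uC cC] /and4P [_ /eqP sC' uC' cC'] /hasP [e eC He'].
have [r [p Er]] := rot_to_edge (c:=C) (e:=e) (ltac:(by rewrite sC arith2)) eC.
move: e Er {eC} He' => [x y] /= Er He'.
have uC1 : uniq (x::y::p) by rewrite -Er rot_uniq.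
have cC1 : path.cycle G (x::y::p) by rewrite -Er rot_cycle.
have sC1 : size (x::y::p) = 4*a by rewrite -Er size_rot.
rewrite -(cycle_supp_rot r C) Er.
move: cC1 => /= /andP [Gxy pp].
have Tr : is_transp (y * x^-1)%g := Gsub _ _ Gxy.
have Sxy : psupp (y * x^-1)%g \subset cycle_supp (x::y::p).
  by apply: vsupp_cycle; rewrite !inE eqxx orbT.
rewrite ltnNge; apply/negP => Hle.
have fin : forall q, uniq (y::x::q) -> path G x (rcons q y) -> size q + 2 = 4*b ->
    (forall w, w \in p -> w \in q -> False) -> False.
  move=> q uq pq sq D; have /andP [U Cy] := build uC1 uq pp pq D.
  have := noC ((y::p) ++ (x::q)); rewrite /is_cycle_of_length U Cy size_cat /=.
  by move/negP; apply; rewrite !andbT; apply: arith1 Hk Hab sC1 sq.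
have key : forall (q : seq 'S_n) (S' : {set 'I_n}), psupp (y*x^-1)%g \subset S' ->
    #|cycle_supp (x::y::p) :&: S'| <= 2 ->
    (forall w, w \in q -> psupp (w*x^-1)%g \subset S') ->
    forall w, w \in p -> w \in q -> False.
  move=> q S' HyS' Hle' Hq w wp wq.
  have wC : w \in x :: y :: p by rewrite !inE wp !orbT.
  have [E|E] := core Hle' Tr Sxy HyS' (vsupp_cycle wC) (Hq w wq);
    by move: uC1 => /=; rewrite !inE -E wp ?orbT /= ?andbF.
case/orP: He' => He'.
- have [r' [q Er']] := rot_to_edge (c:=C') (e:=(x,y)) (ltac:(by rewrite sC' arith2)) He'.
  move: Er' => /= Er'.
  have uq : uniq (x::y::q) by rewrite -Er' rot_uniq.
  have cq : path.cycle G (x::y::q) by rewrite -Er' rot_cycle.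
  have sq : size (x::y::q) = 4*b by rewrite -Er' size_rot.
  move: Hle; rewrite -(cycle_supp_rot r' C') Er' => Hle.
  move: cq => /= /andP [_ pq].
  apply: (fin (rev q)).
  + move: uq; rewrite /= !inE !mem_rev rev_uniq => /andP [/norP [xy xq] /andP [yq ->]].
    by rewrite (eq_sym y) negb_or xy yq xq.
  + exact: rev_form Gs pq.
  + by rewrite size_rev; apply: arith3.
  + move=> w wp; rewrite mem_rev; apply: (key q _ _ Hle) => //.
      by apply: vsupp_cycle; rewrite !inE eqxx orbT.
    by move=> w' w'q; apply: vsupp_cycle; rewrite !inE w'q !orbT.
- have [r' [q Er']] := rot_to_edge (c:=C') (e:=(y,x)) (ltac:(by rewrite sC' arith2)) He'.
  move: Er' => /= Er'.
  have uq : uniq (y::x::q) by rewrite -Er' rot_uniq.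
  have cq : path.cycle G (y::x::q) by rewrite -Er' rot_cycle.
  have sq : size (y::x::q) = 4*b by rewrite -Er' size_rot.
  move: Hle; rewrite -(cycle_supp_rot r' C') Er' => Hle.
  move: cq => /= /andP [_ pq].
  have Hyx : psupp (y * x^-1)%g \subset cycle_supp (y::x::q).
    by rewrite -psuppV invMg invgK; apply: vsupp_cycle; rewrite !inE eqxx orbT.
  apply: (fin q uq pq); first exact: arith3.
  apply: (key q _ Hyx Hle) => w wq.
  have -> : (w * x^-1 = (w * y^-1) * (y * x^-1))%g by rewrite mulgA mulgKV.
  apply: subset_trans (psuppM _ _) _; rewrite subUset Hyx andbT.
  by apply: vsupp_cycle; rewrite !inE wq !orbT.
Qed.
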